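(* Let $k$ be a field of characteristic zero and let $X=Q_1\cap\dots\cap Q_c\subset\mathbb{P}^N$ be a smooth complete intersection of $c$ quadrics over $k$. If $X$ contains a $(c-1)$-dimensional linear subspace defined over $k$, then $X$ is rational over $k$.
   Context: Rational over $k$ means birational over $k$ to a projective space. *)

(* Defs.v *)
From HB Require Import structures.
From mathcomp Require Import all_boot all_order all_algebra.
From mathcomp Require Import mpoly.
Set Implicit Arguments. Unset Strict Implicit. Unset Printing Implicit Defensive.
Import Order.TTheory GRing.Theory Num.Theory.
Local Open Scope ring_scope.

(* Classical projective geometry over a field k, with geometric points taken
   in an arbitrary algebraically closed field K equipped with a ring morphism
   k -> K (every condition below is first-order, hence independent of the
   chosen algebraically closed extension). *)

Definition homogeneous (n : nat) (R : ringType) (d : nat) (p : {mpoly R[n]}) :=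
  all (fun m => mdeg m == d) (msupp p).

Definition evalK (k : fieldType) (K : closedFieldType) (f : {rmorphism k -> K})
  (n : nat) (p : {mpoly k[n]}) (x : 'I_n -> K) : K :=
  (map_mpoly f p).@[x].

Definition onX (k : fieldType) (K : closedFieldType) (f : {rmorphism k -> K})
  (N c : nat) (Q : 'I_c -> {mpoly k[N.+1]}) (x : 'I_N.+1 -> K) : Prop :=
  x <> (fun _ => 0) /\ forall i, evalK f (Q i) x = 0.

(* X = Q_1 ∩ ... ∩ Q_c is a smooth complete intersection of c quadrics:
   the Q_i are quadratic forms and the Jacobian matrix (dQ_i/dx_j) has
   rank c at every geometric point of X (Jacobian criterion). *)
Definition smooth_ci_quadrics (k : fieldType) (N c : nat)
  (Q : 'I_c -> {mpoly k[N.+1]}) : Prop :=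
  (forall i, homogeneous 2 (Q i)) /\
  forall (K : closedFieldType) (f : {rmorphism k -> K}) (x : 'I_N.+1 -> K),
    onX f Q x ->
    \rank (\matrix_(i < c, j < N.+1) evalK f (mderiv j (Q i)) x) = c.

Definition contains_k_linear_subspace (k : fieldType) (N c d : nat)
  (Q : 'I_c -> {mpoly k[N.+1]}) : Prop :=
  exists V : 'M[k]_(d.+1, N.+1),
    row_free V /\
    forall (a : 'I_d.+1 -> k) (i : 'I_c),
      (Q i).@[fun j => \sum_(l < d.+1) a l * V l j] = 0.

(* X = V(Q) is rational over k, i.e. birational over k to P^n, n = dim X:
   there are rational maps phi : X --> P^n and psi : P^n --> X given by
   homogeneous polynomials with coefficients in k (of common degrees dF, dG),
   defined on nonempty (hence dense, X being irreducible) open subsets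
   U = X ∩ {h <> 0} and W = P^n ∩ {h' <> 0}, such that psi∘phi = id on U
   and phi∘psi = id on W (as maps of projective points). *)
Definition rational_over (k : fieldType) (N c n : nat)
  (Q : 'I_c -> {mpoly k[N.+1]}) : Prop :=
  exists (dF dG : nat) (F : 'I_n.+1 -> {mpoly k[N.+1]})
         (G : 'I_N.+1 -> {mpoly k[n.+1]})
         (h : {mpoly k[N.+1]}) (h' : {mpoly k[n.+1]}),
    (forall i, homogeneous dF (F i)) /\ (forall j, homogeneous dG (G j)) /\
    (exists dh, homogeneous dh h) /\ (exists dh', homogeneous dh' h') /\
    forall (K : closedFieldType) (f : {rmorphism k -> K}),
      let phi x := fun i => evalK f (F i) x in
      let psi y := fun j => evalK f (G j) y in
      (exists x, onX f Q x /\ evalK f h x <> 0) /\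
      (forall x, onX f Q x -> evalK f h x <> 0 ->
         phi x <> (fun _ => 0) /\
         exists2 l : K, l <> 0 & psi (phi x) = (fun j => l * x j)) /\
      (exists y : 'I_n.+1 -> K, y <> (fun _ => 0) /\ evalK f h' y <> 0) /\
      (forall y : 'I_n.+1 -> K, y <> (fun _ => 0) -> evalK f h' y <> 0 ->
         onX f Q (psi y) /\
         exists2 l : K, l <> 0 & phi (psi y) = (fun i => l * y i)).

(* Main.v *)
Require Import Defs.
From HB Require Import structures.
From mathcomp Require Import all_boot all_order all_algebra.
From mathcomp Require Import mpoly.
From mathcomp Require Import fingroup perm ring zify.
From Stdlib Require Import Classical FunctionalExtensionality.
Set Implicit Arguments. Unset Strict Implicit. Unset Printing Implicit Defensive.
Import GRing.Theory.
Local Open Scope ring_scope.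

Lemma mdeg2P n (m : 'X_{1..n}) : mdeg m = 2%N -> exists a b, m = (U_(a) + U_(b))%MM.
Proof.
move=> hm.
have [i hi] : exists i, (0 < m i)%N.
  apply/existsP; apply: contraT; rewrite negb_exists => /forallP h.
  have : m = 0%MM by apply/mnmP => i; rewrite mnm0E; move: (h i); rewrite lt0n negbK => /eqP.
  by move=> e; move: hm; rewrite e mdeg0.
have le : (U_(i) <= m)%MM.
  apply/mnm_lepP => j; rewrite mnm1E; case: eqP => [<-|] //.
have e := submK le.
have : mdeg (m - U_(i))%MM = 1%N.
  by move: hm; rewrite -{1}e mdegD mdeg1 addn1 => -[].
move/eqP/mdeg1P => [j /eqP hj]; exists j, i; by rewrite -hj e.
Qed.

Definition Qpoly (R : comNzRingType) n (A : 'M[R]_n) : {mpoly R[n]} :=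
  \sum_a \sum_b A a b *: ('X_a * 'X_b).

Lemma QpolyD (R : comNzRingType) n (A B : 'M[R]_n) : Qpoly (A + B) = Qpoly A + Qpoly B.
Proof.
rewrite /Qpoly -big_split /=; apply: eq_bigr => a _.
rewrite -big_split /=; apply: eq_bigr => b _; by rewrite mxE scalerDl.
Qed.

Lemma Qpoly0 (R : comNzRingType) n : Qpoly (0 : 'M[R]_n) = 0.
Proof. rewrite /Qpoly big1 // => a _; rewrite big1 // => b _; by rewrite mxE scale0r. Qed.

Lemma Qpoly_delta (R : comNzRingType) n (c : R) (a b : 'I_n) :
  Qpoly (c *: delta_mx a b) = c *: ('X_a * 'X_b).
Proof.
rewrite /Qpoly (bigD1 a) //= [X in _ + X]big1 => [|a' ne]; last first.
  rewrite big1 // => b' _; by rewrite !mxE (negbTE ne) mulr0 scale0r.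
rewrite addr0 (bigD1 b) //= [X in _ + X]big1 => [|b' ne]; last by rewrite !mxE (negbTE ne) andbF mulr0 scale0r.
by rewrite addr0 !mxE !eqxx mulr1.
Qed.

Lemma homog2_repr (R : comNzRingType) n (p : {mpoly R[n]}) :
  homogeneous 2 p -> exists A, p = Qpoly A.
Proof.
rewrite /homogeneous => hom; rewrite (mpolyE p).
elim: (msupp p) hom => [|m s IH] /=.
  by move=> _; exists 0; rewrite big_nil Qpoly0.
case/andP => /eqP hm /IH [A eA]; rewrite big_cons eA.
have [a [b e]] := mdeg2P hm.
exists (A + p@_m *: delta_mx a b); by rewrite QpolyD Qpoly_delta e mpolyXD addrC.
Qed.

Definition qf (R : comNzRingType) n (A : 'M[R]_n) (x : 'rV[R]_n) : R := (x *m A *m x^T) 0 0.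

Lemma qfE (R : comNzRingType) n (A : 'M[R]_n) x :
  qf A x = \sum_a \sum_b A a b * (x 0 a * x 0 b).
Proof.
rewrite /qf mxE exchange_big; apply: eq_bigr => b _; rewrite mxE big_distrl /=; apply: eq_bigr => a _.
rewrite !mxE; ring.
Qed.

Lemma meval_Qpoly (R : comNzRingType) n (A : 'M[R]_n) (v : 'I_n -> R) :
  (Qpoly A).@[v] = qf A (\row_j v j).
Proof.
rewrite qfE /Qpoly raddf_sum; apply: eq_bigr => a _; rewrite raddf_sum; apply: eq_bigr => b _.
by rewrite /= mevalZ mevalM !mevalXU !mxE.
Qed.

Lemma map_Qpoly (R S : comNzRingType) (g : {rmorphism R -> S}) n (A : 'M[R]_n) :
  map_mpoly g (Qpoly A) = Qpoly (map_mx g A).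
Proof.
rewrite /Qpoly raddf_sum; apply: eq_bigr => a _; rewrite raddf_sum; apply: eq_bigr => b _.
by rewrite /= map_mpolyZ rmorphM /= !map_mpolyX mxE.
Qed.

Lemma evalK_Qpoly (k : fieldType) (K : closedFieldType) (f : {rmorphism k -> K}) n
  (A : 'M[k]_n) x : evalK f (Qpoly A) x = qf (map_mx f A) (\row_j x j).
Proof. by rewrite /evalK map_Qpoly meval_Qpoly. Qed.

Lemma mderivXU (R : comNzRingType) n (a j : 'I_n) :
  mderiv j ('X_a : {mpoly R[n]}) = if a == j then 1 else 0.
Proof.
rewrite mderivX mnm1E; case: eqP => [->|]; last by rewrite scale0r.
have -> : (U_(j) - U_(j) = 0 :> 'X_{1..n})%MM by apply/mnmP => i; rewrite !mnmE subnn.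
by rewrite mpolyX0 scale1r.
Qed.

Lemma mderiv_Qpoly (R : comNzRingType) n (A : 'M[R]_n) j :
  mderiv j (Qpoly A) = \sum_b (A j b + A b j) *: 'X_b.
Proof.
rewrite /Qpoly raddf_sum /=.
transitivity (\sum_a \sum_b A a b *: ((if a == j then 1 else 0) * 'X_b + 'X_a * (if b == j then 1 else 0))).
  apply: eq_bigr => a _; rewrite raddf_sum; apply: eq_bigr => b _.
  by rewrite /= mderivZ mderivM !mderivXU.
rewrite (eq_bigr (fun a => \sum_b (A a b *: (if a == j then 'X_b else 0)) + A a j *: (if a == j then 'X_j else 'X_a))); last first.
  move=> a _; rewrite (eq_bigr (fun b => A a b *: (if a == j then 'X_b else 0) + A a b *: (if b == j then 'X_a else 0))); last first.
    by move=> b _; rewrite scalerDr; case: eqP; case: eqP; rewrite ?mul1r ?mulr1 ?mul0r ?mulr0.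
  rewrite big_split /=; congr (_ + _); rewrite (bigD1 j) //= eqxx big1 ?addr0 //.
    by case: eqP => [->|].
  by move=> b /negbTE ->; rewrite scaler0.
rewrite big_split /= [X in X + _](bigD1 j) //= eqxx [X in _ + X + _]big1 ?addr0; last first.
  by move=> a /negbTE ->; apply: big1 => b _; rewrite scaler0.
rewrite -big_split /=; apply: eq_bigr => b _; rewrite scalerDl; congr (_ + _).
by case: eqP => [->|].
Qed.


Lemma poly_vanish_nz (K : closedFieldType) (p : {poly K}) :
  (forall t, t != 0 -> p.[t] = 0) -> p = 0.
Proof.
move=> h; apply/eqP; apply: contraT => pnz.
have qnz : 'X * p != 0 by rewrite mulf_neq0 ?polyX_eq0.
have szq : (1 < size ('X * p)%R)%N.
  by rewrite size_mul ?polyX_eq0 // size_polyX; move: pnz; rewrite -size_poly_gt0; case: (size p).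
have : size ('X * p - 1) != 1%N.
  by rewrite size_polyDl ?size_polyN ?size_poly1 //; move: szq; case: (size _) => [|[|]].
case/closed_rootP => z; rewrite /root !hornerE.
have -> : z * p.[z] = 0 by have [->|/h ->] := eqVneq z 0; rewrite ?mul0r ?mulr0.
by rewrite sub0r oppr_eq0 oner_eq0.
Qed.

Lemma row_pid_ge (R : pzSemiRingType) m n r (i : 'I_m) :
  (r <= i)%N -> row i (pid_mx r : 'M[R]_(m, n)) = 0.
Proof. move=> h; apply/matrixP => a b; rewrite !mxE; case: eqP => //= _; by rewrite ltnNge h. Qed.

Lemma col_pid_ge (R : pzSemiRingType) m n r (i : 'I_n) :
  (r <= i)%N -> col i (pid_mx r : 'M[R]_(m, n)) = 0.
Proof. move=> h; apply/matrixP => a b; rewrite !mxE; case: eqP => //= ->; by rewrite ltnNge h. Qed.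

Lemma core_rank (K : closedFieldType) c (B0 : 'M[K]_c) : (\rank B0 < c)%N ->
  exists (a : 'cV[K]_c) (u : 'rV[K]_c), a != 0 /\ u != 0 /\
    forall C, (forall t, (\rank (B0 + t *: C)%R <= \rank B0)%N) -> (u *m C *m a) 0 0 = 0.
Proof.
set r := \rank B0 => hr.
pose ir := Ordinal hr.
pose L := col_ebase B0; pose Rb := row_ebase B0.
have uL : L \in unitmx by apply: col_ebase_unit.
have uR : Rb \in unitmx by apply: row_ebase_unit.
have eB : B0 = L *m pid_mx r *m Rb by rewrite mulmx_ebase.
exists (invmx Rb *m delta_mx ir (0 : 'I_1)), (delta_mx 0 ir *m invmx L).
split.
  apply/eqP => /(congr1 (mulmx Rb)); rewrite mulmxA mulmxV // mul1mx mulmx0 => /matrixP /(_ ir 0).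
  by rewrite !mxE !eqxx => /eqP; rewrite oner_eq0.
split.
  apply/eqP => /(congr1 (mulmx^~ L)); rewrite -mulmxA mulVmx // mulmx1 mul0mx => /matrixP /(_ 0 ir).
  by rewrite !mxE !eqxx => /eqP; rewrite oner_eq0.
move=> C hC.
pose C' := invmx L *m C *m invmx Rb.
have -> : delta_mx (0:'I_1) ir *m invmx L *m C *m (invmx Rb *m delta_mx ir (0:'I_1)) = delta_mx (0:'I_1) ir *m C' *m delta_mx ir (0:'I_1).
  by rewrite /C' !mulmxA.
have hX : forall t : K, (\rank (pid_mx r + t *: C')%R <= r)%N.
  move=> t; have -> : pid_mx r + t *: C' = invmx L *m (B0 + t *: C) *m invmx Rb.
    by rewrite mulmxDr mulmxDl eB !mulmxA mulVmx // mul1mx -(mulmxA (pid_mx r)) mulmxV // mulmx1 /C' -scalemxAr -scalemxAl ?mulmxA.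
  apply: leq_trans (hC t); apply: leq_trans (mxrankM_maxl _ _) _; exact: mxrankM_maxr.
pose S1 : 'M[K]_(1 + r, c) := col_mx (delta_mx 0 ir) (pid_mx r).
pose S2 : 'M[K]_(c, 1 + r) := row_mx (delta_mx ir 0) (pid_mx r).
pose k11 := delta_mx (0:'I_1) ir *m C' *m delta_mx ir (0 : 'I_1).
pose k12 := delta_mx (0 : 'I_1) ir *m C' *m (pid_mx r : 'M_(c, r)).
pose k21 := (pid_mx r : 'M_(r, c)) *m C' *m delta_mx ir (0 : 'I_1).
pose k22 := (pid_mx r : 'M_(r, c)) *m C' *m (pid_mx r : 'M_(c, r)).
have eSP : S1 *m pid_mx r *m S2 = block_mx 0 0 0 1%:M.
  rewrite /S1 /S2 mul_col_mx mul_col_row -rowE row_pid_ge // !mul0mx.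
  by rewrite !mul_pid_mx !minnn (minn_idPr (ltnW hr)) minnn -colE col_pid_ge // (minn_idPr (ltnW hr)) pid_mx_1.
have eSC : S1 *m C' *m S2 = block_mx k11 k12 k21 k22.
  by rewrite /S1 /S2 mul_col_mx mul_col_row.
have hdet : forall t : K, t != 0 -> \det (block_mx k11 (t *: k12) k21 (1%:M + t *: k22)) = 0.
  move=> t tnz.
  have eD : S1 *m (pid_mx r + t *: C') *m S2 =
      block_mx k11 (t *: k12) k21 (1%:M + t *: k22) *m block_mx t%:M 0 0 1%:M.
    rewrite mulmxDr mulmxDl eSP -scalemxAr -scalemxAl eSC scale_block_mx add_block_mx mulmx_block.
    by rewrite !mulmx0 !mulmx1 !mul_mx_scalar !addr0 !add0r.
  have : \det (S1 *m (pid_mx r + t *: C') *m S2) = 0.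
    apply/eqP; apply: contraT => /negPf nz.
    have : S1 *m (pid_mx r + t *: C') *m S2 \in unitmx by rewrite unitmxE unitfE nz.
    move/mxrank_unit => e.
    have := leq_trans (mxrankM_maxl (S1 *m (pid_mx r + t *: C')) S2) (leq_trans (mxrankM_maxr S1 (pid_mx r + t *: C')) (hX t)).
    by rewrite e add1n ltnn.
  rewrite eD det_mulmx det_ublock det_scalar det1 expr1 mulr1 => /eqP.
  by rewrite mulf_eq0 (negPf tnz) orbF => /eqP.
pose E0 := block_mx k11 0 k21 (1%:M : 'M[K]_r).
pose E1 : 'M[K]_(1 + r) := block_mx 0 k12 0 k22.
pose P := \det (map_mx polyC E0 + 'X *: map_mx polyC E1).
have eP : forall t : K, P.[t] = \det (E0 + t *: E1).
  move=> t; rewrite -horner_evalE -det_map_mx; congr (\det _).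
  by apply/matrixP => i j; rewrite !mxE /= horner_evalE !hornerE.
have P0 : P = 0.
  apply: poly_vanish_nz => t /hdet; rewrite eP /E0 /E1 scale_block_mx add_block_mx.
  by rewrite !scaler0 !addr0 add0r.
have := eP 0; rewrite P0 horner0 scale0r addr0 /E0 det_lblock det1 mulr1 det_mx11.
by move=> h; rewrite -h.
Qed.

Lemma pencil (K : closedFieldType) c s (M : 'rV[K]_s -> 'M[K]_c) :
  (forall y y' t, M (y + t *: y') = M y + t *: M y') ->
  (forall (a : 'cV_c) (u : 'rV_c), a != 0 -> u != 0 -> exists y, (u *m M y *m a) 0 0 != 0) ->
  exists y, \det (M y) != 0.
Proof.
move=> lin H.
suff: forall d y, (c - \rank (M y) <= d)%N -> exists y', \det (M y') != 0.
  by move/(_ c 0); apply; rewrite leq_subr.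
elim=> [|d IH] y hd.
  exists y; rewrite -unitfE -unitmxE -row_free_unit /row_free eqn_leq rank_leq_row /=.
  by rewrite -subn_eq0 -leqn0.
have [/eqP e|ne] := eqVneq (\rank (M y)) c.
  by exists y; rewrite -unitfE -unitmxE -row_free_unit /row_free e.
have lt : (\rank (M y) < c)%N by rewrite ltn_neqAle ne rank_leq_row.
case: (classic (exists y', (\rank (M y) < \rank (M y'))%N)) => [[y' hy']|nex].
  apply: (IH y'); move: hd hy'; lia.
have [a [u [anz [unz hcore]]]] := core_rank lt.
have [y' hy'] := H a u anz unz.
case/negP: hy'; apply/eqP; apply: hcore => t.
rewrite -lin; apply/negP => /negP; rewrite -ltnNge => hlt.
by apply: nex; exists (y + t *: y').
Qed.


Definition bf (R : comNzRingType) n m (B : 'M[R]_(n, m)) (x : 'rV_n) (w : 'rV_m) : R :=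
  (x *m B *m w^T) 0 0.

Lemma bfE (R : comNzRingType) n m (B : 'M[R]_(n, m)) x w :
  bf B x w = \sum_a \sum_b x 0 a * B a b * w 0 b.
Proof.
rewrite /bf mxE exchange_big; apply: eq_bigr => b _; rewrite mxE big_distrl /=; apply: eq_bigr => a _.
by rewrite !mxE.
Qed.

Lemma qf_bf (R : comNzRingType) n (A : 'M[R]_n) x : qf A x = bf A x x.
Proof. by []. Qed.

Lemma bf_mul (R : comNzRingType) n m p q (B : 'M[R]_(n, m)) (P : 'M_(p, n)) (P' : 'M_(q, m)) x w :
  bf B (x *m P) (w *m P') = bf (P *m B *m P'^T) x w.
Proof. by rewrite /bf trmx_mul !mulmxA. Qed.

Lemma bf_tr (R : comNzRingType) n m (B : 'M[R]_(n, m)) x w : bf B^T x w = bf B w x.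
Proof.
rewrite /bf; transitivity ((x *m B^T *m w^T)^T 0 0); first by rewrite [RHS]mxE.
by rewrite !trmx_mul !trmxK mulmxA.
Qed.

Lemma bfDm (R : comNzRingType) n m (B C : 'M[R]_(n, m)) x w : bf (B + C) x w = bf B x w + bf C x w.
Proof. by rewrite /bf mulmxDr mulmxDl mxE. Qed.

Lemma bfDl (R : comNzRingType) n m (B : 'M[R]_(n, m)) x x' w : bf B (x + x') w = bf B x w + bf B x' w.
Proof. by rewrite /bf !mulmxDl mxE. Qed.

Lemma bfDr (R : comNzRingType) n m (B : 'M[R]_(n, m)) x w w' : bf B x (w + w') = bf B x w + bf B x w'.
Proof. by rewrite /bf linearD mulmxDr mxE. Qed.

Lemma bfZl (R : comNzRingType) n m (B : 'M[R]_(n, m)) t x w : bf B (t *: x) w = t * bf B x w.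
Proof. by rewrite /bf -!scalemxAl mxE. Qed.

Lemma bfZr (R : comNzRingType) n m (B : 'M[R]_(n, m)) t x w : bf B x (t *: w) = t * bf B x w.
Proof. by rewrite /bf linearZ /= -!scalemxAr mxE. Qed.

Lemma bf0l (R : comNzRingType) n m (B : 'M[R]_(n, m)) w : bf B 0 w = 0.
Proof. by rewrite /bf !mul0mx mxE. Qed.

Lemma bf0r (R : comNzRingType) n m (B : 'M[R]_(n, m)) x : bf B x 0 = 0.
Proof. by rewrite /bf trmx0 mulmx0 mxE. Qed.

Lemma bf0m (R : comNzRingType) n m x w : bf (0 : 'M[R]_(n, m)) x w = 0.
Proof. by rewrite /bf mulmx0 mul0mx mxE. Qed.

Lemma bf_row (R : comNzRingType) n1 n2 m1 m2 (B : 'M[R]_(n1 + n2, m1 + m2)) a y a' y' :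
  bf B (row_mx a y) (row_mx a' y') = bf (ulsubmx B) a a' + bf (ursubmx B) a y'
    + bf (dlsubmx B) y a' + bf (drsubmx B) y y'.
Proof.
rewrite /bf -{1}(submxK B) mul_row_block tr_row_mx mul_row_col !mulmxDl.
rewrite [LHS]mxE [X in X + _ = _]mxE [X in _ + X = _]mxE; ring.
Qed.

Lemma bf_delta (R : comNzRingType) n m (B : 'M[R]_(n, m)) l l' :
  bf B (delta_mx 0 l) (delta_mx 0 l') = B l l'.
Proof. by rewrite /bf -rowE trmx_delta -colE !mxE. Qed.

Lemma qfD (R : comNzRingType) n (B : 'M[R]_n) x y :
  qf B (x + y) = qf B x + qf B y + (bf B x y + bf B y x).
Proof. rewrite !qf_bf bfDl !bfDr; ring. Qed.

Lemma row_fun (R : Type) n (x : 'rV[R]_n) : \row_j x 0 j = x.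
Proof. by apply/matrixP => i j; rewrite mxE ord1. Qed.

Lemma bf_deltar (R : comNzRingType) n m (B : 'M[R]_(n, m)) x j :
  bf B x (delta_mx 0 j) = \sum_a x 0 a * B a j.
Proof. rewrite /bf trmx_delta -mulmxA -colE mxE; apply: eq_bigr => a _; by rewrite mxE. Qed.

Lemma homogeneousE (R : comNzRingType) p d (q : {mpoly R[p]}) : homogeneous d q = (q \is d.-homog).
Proof. by rewrite dhomogE. Qed.

Lemma prod_homog (R : comNzRingType) p n d (F : 'I_n -> {mpoly R[p]}) :
  (forall i, F i \is d.-homog) -> \prod_i F i \is (d * n).-homog.
Proof.
elim: n F => [|n IH] F h; first by rewrite big_ord0 muln0 dhomog1.
rewrite big_ord_recr /= mulnS addnC; apply: dhomogM => //; exact: IH.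
Qed.

Lemma det_homog (R : comNzRingType) p n d (M : 'M[{mpoly R[p]}]_n) :
  (forall i j, M i j \is d.-homog) -> \det M \is (d * n).-homog.
Proof.
move=> h; rewrite /determinant; apply: rpred_sum => sg _.
have hp : \prod_i M i (sg i) \is (d * n).-homog by apply: prod_homog.
by case: (odd_perm sg) => /=; rewrite ?expr0 ?expr1 ?mul1r ?mulN1r ?rpredN.
Qed.

Lemma adj_homog (R : comNzRingType) p n d (M : 'M[{mpoly R[p]}]_n.+1) :
  (forall i j, M i j \is d.-homog) -> forall i j, \adj M i j \is (d * n).-homog.
Proof.
move=> h i j; rewrite mxE /cofactor.
have hd : \det (row' j (col' i M)) \is (d * n).-homog by apply: det_homog => a b; rewrite !mxE.
by rewrite -signr_odd; case: (odd _) => /=; rewrite ?expr0 ?expr1 ?mul1r ?mulN1r ?rpredN.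
Qed.

Lemma Qpoly_homog (R : comNzRingType) n (B : 'M[R]_n) : Qpoly B \is 2.-homog.
Proof.
apply: rpred_sum => a _; apply: rpred_sum => b _; apply: rpredZ.
by apply: (@dhomogM _ _ _ 1 _ 1); rewrite dhomogX; apply/eqP; apply: mdeg1.
Qed.

Lemma lin_homog (R : comNzRingType) n (b : 'I_n -> R) : \sum_j b j *: 'X_j \is [in R[n], 1.-homog].
Proof. by apply: rpred_sum => j _; apply: rpredZ; rewrite dhomogX; apply/eqP; apply: mdeg1. Qed.

Section Main.
Variables (k : fieldType) (char0 : [pchar k] =i pred0) (c' s N : nat).
Local Notation c := c'.+1.
Variables (A : 'I_c -> 'M[k]_(N.+1)) (Rr : 'M[k]_(c + s, N.+1)) (Ri : 'M[k]_(N.+1, c + s)).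
Hypotheses (RRi : Rr *m Ri = 1%:M) (RiR : Ri *m Rr = 1%:M).
Hypothesis van : forall i (b : 'rV[k]_c), qf (A i) (b *m usubmx Rr) = 0.

Definition A2 i := Rr *m A i *m Rr^T.
Definition Bm i : 'M[k]_(c, s) := ursubmx (A2 i) + (dlsubmx (A2 i))^T.
Definition A22 i := drsubmx (A2 i).

Lemma qfA2 i (z : 'rV[k]_(c + s)) : qf (A i) (z *m Rr) = qf (A2 i) z.
Proof. by rewrite !qf_bf bf_mul. Qed.

Lemma A11_skew i : ulsubmx (A2 i) + (ulsubmx (A2 i))^T = 0.
Proof.
set B := ulsubmx (A2 i).
have H : forall b, qf B b = 0.
  move=> b; move: (van i b).
  have -> : b *m usubmx Rr = row_mx b 0 *m Rr by rewrite -{2}(vsubmxK Rr) mul_row_col mul0mx addr0.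
  by rewrite qfA2 qf_bf bf_row !bf0l !bf0r !addr0.
apply/matrixP => l l'; rewrite -bf_delta bfDm bf_tr mxE.
move: (qfD B (delta_mx 0 l) (delta_mx 0 l')); rewrite !H !add0r => e; by rewrite -e.
Qed.

Definition Mgen p (L : 'I_s -> {mpoly k[p]}) : 'M[{mpoly k[p]}]_c :=
  \matrix_(i, l) \sum_m Bm i l m *: L m.
Definition Fp (m : 'I_s) : {mpoly k[N.+1]} := \sum_j Ri j (rshift c m) *: 'X_j.
Definition Mp := Mgen (fun m : 'I_s => 'X_m).
Definition Mh := Mgen Fp.
Definition qp : 'cV[{mpoly k[s]}]_c := \col_i Qpoly (A22 i).
Definition Dp := \det Mp.
Definition hp := \det Mh.
Definition Zp : 'rV[{mpoly k[s]}]_(c + s) := row_mx (- (\adj Mp *m qp)^T) (Dp *: \row_m 'X_m).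
Definition Gp (j : 'I_N.+1) : {mpoly k[s]} := \sum_q Zp 0 q * (Rr q j)%:MP.

Lemma Mgen_homog p (L : 'I_s -> {mpoly k[p]}) : (forall m, L m \is 1.-homog) ->
  forall i l, Mgen L i l \is 1.-homog.
Proof. move=> h i l; rewrite mxE; apply: rpred_sum => m _; exact: rpredZ. Qed.

Lemma Fp_homog m : homogeneous 1 (Fp m).
Proof. rewrite homogeneousE; exact: lin_homog. Qed.

Lemma Mp_homog i l : Mp i l \is 1.-homog.
Proof. apply: Mgen_homog => m; by rewrite dhomogX; apply/eqP; apply: mdeg1. Qed.

Lemma Dp_homog : homogeneous c Dp.
Proof. rewrite homogeneousE -(mul1n c); apply: det_homog; exact: Mp_homog. Qed.

Lemma hp_homog : homogeneous c hp.
Proof.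
rewrite homogeneousE -(mul1n c); apply: det_homog; apply: Mgen_homog => m.
by rewrite -homogeneousE; apply: Fp_homog.
Qed.

Lemma Zp_homog q : Zp 0 q \is c'.+2.-homog.
Proof.
rewrite /Zp mxE; case: splitP => l _; rewrite !mxE.
  rewrite rpredN; apply: rpred_sum => i _.
  have hadj : \adj Mp l i \is (1 * c').-homog by apply: adj_homog => a b; apply: Mp_homog.
  rewrite mul1n in hadj.
  have hq : qp i 0 \is 2.-homog by rewrite mxE Qpoly_homog.
  by have := dhomogM hadj hq; rewrite addn2.
have hD : Dp \is (1 * c).-homog by apply: det_homog; apply: Mp_homog.
rewrite mul1n in hD.
have hX : ('X_l : {mpoly k[s]}) \is 1.-homog by rewrite dhomogX; apply/eqP; apply: mdeg1.
by have := dhomogM hD hX; rewrite addn1.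
Qed.

Lemma Gp_homog j : homogeneous c'.+2 (Gp j).
Proof.
rewrite homogeneousE; apply: rpred_sum => q _.
by rewrite mulrC mul_mpolyC rpredZ // Zp_homog.
Qed.

Section OverK.
Variables (K : closedFieldType) (f : {rmorphism k -> K}).

Definition Mk (y : 'rV[K]_s) : 'M[K]_c := \matrix_(i, l) \sum_m f (Bm i l m) * y 0 m.
Definition qk (y : 'rV[K]_s) : 'cV[K]_c := \col_i qf (map_mx f (A22 i)) y.
Definition zc (x : 'I_N.+1 -> K) : 'rV_(c + s) := (\row_j x j) *m map_mx f Ri.
Definition xof (z : 'rV[K]_(c + s)) : 'I_N.+1 -> K := fun j => (z *m map_mx f Rr) 0 j.

Lemma two_nz : (2%:R : K) != 0.
Proof. by rewrite -(rmorph_nat f) fmorph_eq0; move/pcharf0P: char0 => ->. Qed.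

Lemma qf_A11 i (a : 'rV[K]_c) : qf (map_mx f (ulsubmx (A2 i))) a = 0.
Proof.
apply/eqP; rewrite -(mulrI_eq0 _ (lregP two_nz)); apply/eqP.
by rewrite mulr2n mulrDl mul1r {2}qf_bf -bf_tr -bfDm map_trmx -raddfD /= A11_skew map_mx0 bf0m.
Qed.

Lemma bf_Bm i (a : 'rV[K]_c) y : bf (map_mx f (Bm i)) a y = (Mk y *m a^T) i 0.
Proof.
rewrite bfE mxE; apply: eq_bigr => l _; rewrite !mxE big_distrl /=; apply: eq_bigr => m _.
rewrite !mxE; ring.
Qed.

Lemma xofK z : zc (xof z) = z.
Proof.
by rewrite /zc /xof row_fun -mulmxA -map_mxM RRi map_mx1 mulmx1.
Qed.

Lemma zcK x : xof (zc x) = x.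
Proof.
by apply: functional_extensionality => j; rewrite /zc /xof -mulmxA -map_mxM RiR map_mx1 mulmx1 mxE.
Qed.

Lemma KI i a y : evalK f (Qpoly (A i)) (xof (row_mx a y)) = (Mk y *m a^T) i 0 + qk y i 0.
Proof.
rewrite evalK_Qpoly /xof row_fun qf_bf bf_mul map_trmx -!map_mxM -/(A2 i).
rewrite bf_row -map_ulsubmx -qf_bf qf_A11 add0r -map_ursubmx -map_dlsubmx -(bf_tr (map_mx f (dlsubmx (A2 i)))).
rewrite -bfDm map_trmx -raddfD /= -/(Bm i) bf_Bm -map_drsubmx; congr (_ + _).
by rewrite mxE.
Qed.

Definition ev p (v : 'I_p -> K) : {rmorphism {mpoly k[p]} -> K} := (meval v) \o (map_mpoly f).

Lemma evE p (v : 'I_p -> K) q : evalK f q v = ev v q.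
Proof. by []. Qed.

Lemma ev_lin p (v : 'I_p -> K) I (r : seq I) (P : pred I) (b : I -> k) (L : I -> {mpoly k[p]}) :
  ev v (\sum_(m <- r | P m) b m *: L m) = \sum_(m <- r | P m) f (b m) * ev v (L m).
Proof. rewrite rmorph_sum; apply: eq_bigr => m _; by rewrite /= map_mpolyZ mevalZ. Qed.

Lemma evMgen p (v : 'I_p -> K) L : map_mx (ev v) (Mgen L) = Mk (\row_m ev v (L m)).
Proof. apply/matrixP => i l; rewrite !mxE ev_lin; apply: eq_bigr => m _; by rewrite ?mxE. Qed.

Lemma evFp x m : ev x (Fp m) = rsubmx (zc x) 0 m.
Proof.
rewrite ev_lin !mxE; apply: eq_bigr => j _.
by rewrite /= map_mpolyX mevalXU !mxE mulrC.
Qed.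

Lemma evMh x : map_mx (ev x) Mh = Mk (rsubmx (zc x)).
Proof. rewrite evMgen; congr Mk; apply/matrixP => i m; by rewrite ord1 mxE evFp. Qed.

Lemma evMp y : map_mx (ev y) Mp = Mk (\row_m y m).
Proof. rewrite evMgen; congr Mk; apply/matrixP => i m; by rewrite !mxE /= map_mpolyX mevalXU. Qed.

Lemma evqp y : map_mx (ev y) qp = qk (\row_m y m).
Proof. apply/matrixP => i l; rewrite !mxE /=; exact: evalK_Qpoly. Qed.

Definition Zk (yr : 'rV[K]_s) : 'rV[K]_(c + s) :=
  row_mx (- (\adj (Mk yr) *m qk yr)^T) (\det (Mk yr) *: yr).

Lemma evZp y : map_mx (ev y) Zp = Zk (\row_m y m).
Proof.
rewrite /Zp /Zk map_row_mx map_mxN -map_trmx map_mxM map_mx_adj evMp evqp map_mxZ.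
rewrite /Dp -det_map_mx evMp; congr (row_mx _ (_ *: _)).
apply/matrixP => i m; by rewrite !mxE /= map_mpolyX mevalXU.
Qed.

Lemma evGp y : (fun j => evalK f (Gp j) y) = xof (Zk (\row_m y m)).
Proof.
apply: functional_extensionality => j; rewrite evE /Gp /xof -evZp rmorph_sum mxE.
apply: eq_bigr => q _; by rewrite rmorphM /= map_mpolyC mevalC !mxE.
Qed.

Lemma evDp y : evalK f Dp y = \det (Mk (\row_m y m)).
Proof. by rewrite evE /Dp -det_map_mx evMp. Qed.

Lemma evhp x : evalK f hp x = \det (Mk (rsubmx (zc x))).
Proof. by rewrite evE /hp -det_map_mx evMh. Qed.

Lemma Mk_lin y y' t : Mk (y + t *: y') = Mk y + t *: Mk y'.
Proof.
apply/matrixP => i l; rewrite !mxE big_distrr -big_split /=; apply: eq_bigr => m _.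
rewrite !mxE; ring.
Qed.

Lemma Mk0 : Mk 0 = 0.
Proof. apply/matrixP => i l; rewrite !mxE big1 // => m _; by rewrite !mxE mulr0. Qed.

Lemma MkZ t y : Mk (t *: y) = t *: Mk y.
Proof. by rewrite -(add0r (t *: y)) Mk_lin Mk0 add0r. Qed.

Lemma qkZ t y : qk (t *: y) = (t ^+ 2) *: qk y.
Proof. apply/matrixP => i l; rewrite !mxE !qf_bf bfZl bfZr; ring. Qed.

Lemma qk0 : qk 0 = 0.
Proof. by rewrite -(scale0r 0) qkZ expr0n /= scale0r. Qed.

Lemma KI_mx a y :
  \col_i evalK f (Qpoly (A i)) (xof (row_mx a y)) = Mk y *m a^T + qk y.
Proof. apply/matrixP => i l; by rewrite ord1 !mxE KI !mxE. Qed.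

Lemma onX_KI x : onX f (fun i => Qpoly (A i)) x ->
  Mk (rsubmx (zc x)) *m (lsubmx (zc x))^T + qk (rsubmx (zc x)) = 0.
Proof.
case=> _ h; rewrite -KI_mx hsubmxK zcK; apply/matrixP => i l; by rewrite !mxE h.
Qed.

Lemma P2 x : onX f (fun i => Qpoly (A i)) x ->
  Zk (rsubmx (zc x)) = \det (Mk (rsubmx (zc x))) *: zc x.
Proof.
move=> /onX_KI h; rewrite /Zk.
have -> : qk (rsubmx (zc x)) = - (Mk (rsubmx (zc x)) *m (lsubmx (zc x))^T).
  by apply/eqP; rewrite -addr_eq0 addrC h.
rewrite mulmxN linearN /= opprK mulmxA mul_adj_mx mul_scalar_mx linearZ /= trmxK.
by rewrite -scale_row_mx hsubmxK.
Qed.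

Lemma P3 y : \det (Mk y) != 0 -> y != 0 ->
  onX f (fun i => Qpoly (A i)) (xof (Zk y)) /\ rsubmx (zc (xof (Zk y))) = \det (Mk y) *: y.
Proof.
move=> Dnz ynz; rewrite xofK /Zk row_mxKr; split => //; split.
  move=> e; move: (congr1 zc e); rewrite xofK.
  have -> : zc (fun _ => 0) = 0 by rewrite /zc; apply/matrixP => i j; rewrite !mxE big1 // => q _; rewrite mxE mul0r.
  move/(congr1 rsubmx); rewrite row_mxKr; move/eqP; rewrite linear0 scaler_eq0 (negPf Dnz) /=.
  by rewrite (negPf ynz).
move=> i.
have e := KI_mx (- (\adj (Mk y) *m qk y)^T) (\det (Mk y) *: y).
have e0 : Mk (\det (Mk y) *: y) *m (- (\adj (Mk y) *m qk y)^T)^T + qk (\det (Mk y) *: y) = 0.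
  rewrite MkZ qkZ linearN /= trmxK mulmxN -scalemxAl mulmxA mul_mx_adj mul_scalar_mx scalerA -expr2.
  by rewrite addrC subrr.
have := congr1 (fun M : 'M[K]_(c, 1) => M i 0) e; rewrite e0 !mxE => ->. done.
Qed.

Lemma zc0 : zc (fun _ => 0) = 0.
Proof. by rewrite /zc; apply/matrixP => i j; rewrite !mxE big1 // => q _; rewrite mxE mul0r. Qed.

Lemma jac_entry i j x : evalK f (mderiv j (Qpoly (A i))) x =
  bf (map_mx f (A i + (A i)^T)) (\row_j x j) (delta_mx 0 j).
Proof.
rewrite mderiv_Qpoly evE ev_lin bf_deltar; apply: eq_bigr => b _.
rewrite /= map_mpolyX mevalXU !mxE rmorphD /=; ring.
Qed.

Lemma bfS i a' w : bf (map_mx f (A2 i)) (row_mx a' 0) w + bf (map_mx f (A2 i)) w (row_mx a' 0)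
  = (Mk (rsubmx w) *m a'^T) i 0.
Proof.
rewrite -(hsubmxK w) !bf_row !bf0l !bf0r !addr0 row_mxKr.
rewrite -!map_ulsubmx -!map_ursubmx -!map_dlsubmx.
set B11 := map_mx f (ulsubmx (A2 i)).
have -> : bf B11 a' (lsubmx w) + bf (map_mx f (ursubmx (A2 i))) a' (rsubmx w) +
   (bf B11 (lsubmx w) a' + bf (map_mx f (dlsubmx (A2 i))) (rsubmx w) a') =
   bf (map_mx f (ulsubmx (A2 i) + (ulsubmx (A2 i))^T)) a' (lsubmx w) +
   bf (map_mx f (Bm i)) a' (rsubmx w).
  rewrite /Bm !raddfD /= !bfDm -!map_trmx !bf_tr; ring.
by rewrite A11_skew map_mx0 bf0m add0r bf_Bm.
Qed.

Lemma Hsm (sm : forall x, onX f (fun i => Qpoly (A i)) x ->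
    \rank (\matrix_(i < c, j < N.+1) evalK f (mderiv j (Qpoly (A i))) x) = c)
  (a : 'cV[K]_c) (u : 'rV[K]_c) : a != 0 -> u != 0 -> exists y, (u *m Mk y *m a) 0 0 != 0.
Proof.
move=> anz unz.
case: (classic (exists y, (u *m Mk y *m a) 0 0 != 0)) => // nex; exfalso.
have hy : forall y, (u *m Mk y *m a) 0 0 = 0.
  by move=> y; apply/eqP; apply: contraT => h; case: nex; exists y.
pose x := xof (row_mx a^T 0).
have ox : onX f (fun i => Qpoly (A i)) x.
  split.
    move=> e; move: (congr1 zc e); rewrite xofK zc0 => /(congr1 lsubmx).
    rewrite row_mxKl linear0 => /(congr1 trmx); rewrite trmxK linear0 => /eqP.
    by rewrite (negPf anz).
  move=> i; have := congr1 (fun M : 'M[K]_(c, 1) => M i 0) (KI_mx a^T 0).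
  by rewrite Mk0 qk0 mul0mx addr0 !mxE.
have rf : row_free (\matrix_(i < c, j < N.+1) evalK f (mderiv j (Qpoly (A i))) x).
  by rewrite /row_free sm.
move/negP: unz; apply; apply/eqP.
apply: (row_free_inj rf); rewrite mul0mx /=.
apply/matrixP => z j; rewrite ord1 !mxE.
rewrite (eq_bigr (fun i => u 0 i * (Mk (rsubmx (delta_mx 0 j *m map_mx f Ri)) *m a) i 0)); last first.
  move=> i _; rewrite mxE jac_entry; congr (_ * _).
  have -> : (\row_j0 x j0) = row_mx a^T 0 *m map_mx f Rr by rewrite /x /xof row_fun.
  have ed : delta_mx (0:'I_1) j = (delta_mx (0:'I_1) j *m map_mx f Ri) *m map_mx f Rr.
    by rewrite -mulmxA -map_mxM RiR map_mx1 mulmx1.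
  have eS : Rr *m (A i + (A i)^T) *m Rr^T = A2 i + (A2 i)^T.
    by rewrite mulmxDr mulmxDl /A2 !trmx_mul trmxK !mulmxA.
  rewrite {1}ed bf_mul map_trmx -!map_mxM eS raddfD /= bfDm -map_trmx bf_tr bfS trmxK //.
transitivity ((u *m Mk (rsubmx (delta_mx 0 j *m map_mx f Ri)) *m a) 0 0); last exact: hy.
by rewrite -mulmxA mxE.
Qed.

Lemma xofZ t z : xof (t *: z) = fun j => t * xof z j.
Proof. by apply: functional_extensionality => j; rewrite /xof -scalemxAl mxE. Qed.

Lemma K_part (sm : forall x, onX f (fun i => Qpoly (A i)) x ->
    \rank (\matrix_(i < c, j < N.+1) evalK f (mderiv j (Qpoly (A i))) x) = c) :
  let phi x := fun i => evalK f (Fp i) x in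
  let psi y := fun j => evalK f (Gp j) y in
  (exists x, onX f (fun i => Qpoly (A i)) x /\ evalK f hp x <> 0) /\
  (forall x, onX f (fun i => Qpoly (A i)) x -> evalK f hp x <> 0 ->
     phi x <> (fun _ => 0) /\
     exists2 l : K, l <> 0 & psi (phi x) = (fun j => l * x j)) /\
  (exists y : 'I_s -> K, y <> (fun _ => 0) /\ evalK f Dp y <> 0) /\
  (forall y : 'I_s -> K, y <> (fun _ => 0) -> evalK f Dp y <> 0 ->
     onX f (fun i => Qpoly (A i)) (psi y) /\
     exists2 l : K, l <> 0 & phi (psi y) = (fun i => l * y i)).
Proof.
move=> phi psi.
have phiE x : phi x = fun m => rsubmx (zc x) 0 m.
  by apply: functional_extensionality => m; rewrite /phi evE evFp.
have psiE y : psi y = xof (Zk (\row_m y m)) by rewrite /psi evGp.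
have [y0 hy0] := pencil Mk_lin (Hsm sm).
have y0nz : y0 != 0 by apply: contraNneq hy0 => ->; rewrite Mk0 det0.
split.
  have [ox ex] := P3 hy0 y0nz.
  exists (xof (Zk y0)); split => //.
  rewrite evhp ex MkZ detZ; apply/eqP; rewrite mulf_neq0 // expf_neq0 //.
split.
  move=> x ox hx; have Dnz : \det (Mk (rsubmx (zc x))) != 0 by apply/eqP; rewrite -evhp.
  split.
    rewrite phiE => e; move/eqP: Dnz; apply.
    have -> : rsubmx (zc x) = 0.
      apply/matrixP => i m; rewrite ord1 [RHS]mxE; exact: (congr1 (fun g => g m) e).
    by rewrite Mk0 det0.
  exists (\det (Mk (rsubmx (zc x)))); first exact/eqP.
  by rewrite psiE phiE row_fun (P2 ox) xofZ zcK.
split.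
  exists (fun m => y0 0 m); split.
    move=> e; move/eqP: y0nz; apply; apply/matrixP => i m.
    by rewrite ord1 mxE (congr1 (fun g => g m) e).
  by rewrite evDp row_fun; apply/eqP.
move=> y ynz hy.
have yrnz : \row_m y m != 0.
  apply/eqP => e; apply: ynz; apply: functional_extensionality => m.
  by move: (congr1 (fun M : 'rV[K]_s => M 0 m) e); rewrite !mxE.
have Dnz : \det (Mk (\row_m y m)) != 0 by apply/eqP; rewrite -evDp.
have [ox ex] := P3 Dnz yrnz.
rewrite psiE; split => //.
exists (\det (Mk (\row_m y m))); first exact/eqP.
by rewrite phiE ex; apply: functional_extensionality => m; rewrite !mxE.
Qed.
End OverK.
End Main.

Lemma assemble (k : fieldType) (char0 : [pchar k] =i pred0) (c' n N : nat)
  (A : 'I_c'.+1 -> 'M[k]_(N.+1)) (Rr : 'M[k]_(c'.+1 + n.+1, N.+1)) (Ri : 'M[k]_(N.+1, c'.+1 + n.+1))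
  (RRi : Rr *m Ri = 1%:M) (RiR : Ri *m Rr = 1%:M)
  (van : forall i (b : 'rV[k]_c'.+1), qf (A i) (b *m usubmx Rr) = 0)
  (sm : smooth_ci_quadrics (fun i => Qpoly (A i))) :
  rational_over n (fun i => Qpoly (A i)).
Proof.
exists 1%N, c'.+2, (Fp Ri), (Gp A Rr), (hp A Rr Ri), (Dp A Rr).
split; first exact: Fp_homog.
split; first exact: Gp_homog.
split; first by exists c'.+1; apply: hp_homog.
split; first by exists c'.+1; apply: Dp_homog.
move=> K f; apply: K_part => //.
exact: (sm.2 K f).
Qed.


Lemma coords (F : fieldType) c s p (e : p = (c + s)%N) (V : 'M[F]_(c, p)) : row_free V ->
  exists (L : 'M[F]_c) (Rr : 'M[F]_(c + s, p)) (Ri : 'M[F]_(p, c + s)),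
    L \in unitmx /\ Rr *m Ri = 1%:M /\ Ri *m Rr = 1%:M /\ V = L *m usubmx Rr.
Proof.
subst p => rf.
exists (col_ebase V), (row_ebase V), (invmx (row_ebase V)).
have uR := row_ebase_unit V.
split; first exact: col_ebase_unit.
split; first by rewrite mulmxV.
split; first by rewrite mulVmx.
rewrite -{1}(mulmx_ebase V) (eqP rf) -mulmxA; congr (_ *m _).
by rewrite pid_mx_row -{1}(vsubmxK (row_ebase V)) mul_row_col mul1mx mul0mx addr0.
Qed.

Lemma case0 (k : fieldType) N (Q : 'I_0 -> {mpoly k[N.+1]}) : rational_over N Q.
Proof.
have h1 : forall p, homogeneous 0 (1 : {mpoly k[p]}) by move=> p; rewrite homogeneousE dhomog1.
have hX : forall p (i : 'I_p), homogeneous 1 ('X_i : {mpoly k[p]}).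
  by move=> p i; rewrite homogeneousE dhomogX; apply/eqP; apply: mdeg1.
exists 1%N, 1%N, (fun i => 'X_i), (fun j => 'X_j), 1, 1.
split; first by move=> i; apply: hX.
split; first by move=> i; apply: hX.
split; first by exists 0%N.
split; first by exists 0%N.
move=> K f /=.
have eX : forall (x : 'I_N.+1 -> K) i, evalK f 'X_i x = x i.
  by move=> x i; rewrite /evalK map_mpolyX mevalXU.
have e1 : forall (x : 'I_N.+1 -> K), evalK f 1 x = 1.
  by move=> x; rewrite /evalK rmorph1 meval1.
have onXE : forall x, x <> (fun _ => 0) -> onX f Q x by move=> x hx; split => // -[].
have ex1 : (fun _ : 'I_N.+1 => (1 : K)) <> (fun _ => 0).
  by move=> e; have := congr1 (fun g => g ord0) e; move/eqP; rewrite oner_eq0.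
have idf1 : forall x : 'I_N.+1 -> K, (fun j => evalK f 'X_j x) = x.
  by move=> x; apply: functional_extensionality => j; rewrite !eX.
have idf : forall x : 'I_N.+1 -> K, (fun j => evalK f 'X_j (fun i => evalK f 'X_i x)) = x.
  by move=> x; rewrite !idf1.
split; first by exists (fun _ => 1); split; [exact: onXE | rewrite e1; apply/eqP; exact: oner_neq0].
split.
  move=> x [hx _] _; split.
    by move=> e; apply: hx; rewrite -(idf x) e; apply: functional_extensionality => j; rewrite eX.
  by exists 1; [apply/eqP; exact: oner_neq0 | rewrite idf; apply: functional_extensionality => j; rewrite mul1r].
split; first by exists (fun _ => 1); split; [exact: ex1 | rewrite e1; apply/eqP; exact: oner_neq0].
move=> y hy _; split.
  by apply: onXE; rewrite idf1.
by exists 1; [apply/eqP; exact: oner_neq0 | rewrite idf; apply: functional_extensionality => j; rewrite mul1r].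
Qed.

Unset Implicit Arguments.

Theorem lemma4p3 (k : fieldType) (N c : nat) (Q : 'I_c -> {mpoly k[N.+1]}) :
  [pchar k] =i pred0 ->
  (c < N)%N ->
  smooth_ci_quadrics Q ->
  contains_k_linear_subspace (c.-1) Q ->
  rational_over (N - c) Q.
Proof.
move=> char0 hcN sm [V [rfV vanV]].
case: c Q sm V rfV vanV hcN => [|c'] Q sm V rfV vanV hcN.
  by rewrite subn0; apply: case0.
have [A eA] : exists A : 'I_c'.+1 -> 'M[k]_(N.+1), forall i, Q i = Qpoly (A i).
  apply: (@fin_all_exists _ (fun _ => 'M[k]_(N.+1)) (fun i B => Q i = Qpoly B)) => i.
  exact: homog2_repr (sm.1 i).
have eQ : Q = (fun i => Qpoly (A i)) by apply: functional_extensionality.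
rewrite eQ in sm vanV *; clear eQ eA Q.
set n := (N - c'.+1)%N.
have e : N.+1 = (c'.+1 + n.+1)%N by rewrite /n addnS subnKC // ltnW.
have [L [Rr [Ri [uL [RRi [RiR eV]]]]]] := coords e rfV.
apply: (assemble char0 RRi RiR _ sm).
move=> i b; have := vanV (fun l => (b *m invmx L) 0 l) i.
rewrite meval_Qpoly => <-; congr qf.
have -> : b *m usubmx Rr = (b *m invmx L) *m V by rewrite eV mulmxA mulmxKV.
by apply/matrixP => z j; rewrite ord1 !mxE.
Qed.
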